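(* Let $\alpha_1,\ldots,\alpha_t\in\mathbb{T}$ and $\varepsilon>0$. Then: (1) there exists a positive integer $M$ such that for every $\beta\in\mathbb{T}$, if $\|\beta H_\varepsilon(\alpha_1,\ldots,\alpha_t)\|\le 1/6$ then $\beta\in\langle\alpha_1,\ldots,\alpha_t\rangle_M$; (2) for such an $M$ and every open set $V\subseteq\mathbb{T}$ with $V\supseteq\langle\alpha_1,\ldots,\alpha_t\rangle_M$, there exists a positive integer $N$ such that for every $\beta\in\mathbb{T}$, if $\|\beta H_{N,\varepsilon}(\alpha_1,\ldots,\alpha_t)\|\le 1/6$ then $\beta\in V$.
   Context: $\mathbb{T}=\mathbb{R}/\mathbb{Z}$; $\|x\|$ is the distance from $x$ to the nearest integer. Bohr sets: $H_\varepsilon(\alpha_1,\ldots,\alpha_t)=\{n\in\mathbb{N}: \|n\alpha_1\|,\ldots,\|n\alpha_t\|\le\varepsilon\}$ and $H_{N,\varepsilon}(\alpha_1,\ldots,\alpha_t)=\{n\in\mathbb{N}, n\le N: \|n\alpha_1\|,\ldots,\|n\alpha_t\|\le\varepsilon\}$. For $M\in\mathbb{N}$, $\langle\alpha_1,\ldots,\alpha_t\rangle_M=\{k_1\alpha_1+\cdots+k_t\alpha_t: k_i\in\mathbb{Z},\ |k_1|,\ldots,|k_t|\le M\}$. For $\beta\in\mathbb{T}$ and $S\subseteq\mathbb{N}$, $\|\beta S\|=\sup\{\|n\beta\|: n\in S\}$. *)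

(* Defs.v *)
(* elements of T = R/Z are represented by real numbers. *)
From Stdlib Require Import Reals Lra ZArith.
Open Scope R_scope.

(* ||x|| : distance from x to the nearest integer. *)
Definition dnint (x : R) : R := Rmin (frac_part x) (1 - frac_part x).

(* Bohr set H_eps(alpha_1..alpha_t) (alpha_i = alpha i, i < t), as a predicate on nat. *)
Definition Bohr (t : nat) (alpha : nat -> R) (eps : R) (n : nat) : Prop :=
  (1 <= n)%nat /\ forall i : nat, (i < t)%nat -> dnint (INR n * alpha i) <= eps.

Definition BohrN (N : nat) (t : nat) (alpha : nat -> R) (eps : R) (n : nat) : Prop :=
  Bohr t alpha eps n /\ (n <= N)%nat.

(* ||beta S|| <= c, i.e. sup { ||n beta|| : n in S } <= c. *)
Definition normS_le (beta : R) (S : nat -> Prop) (c : R) : Prop :=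
  forall n : nat, S n -> dnint (INR n * beta) <= c.

Fixpoint lincomb (t : nat) (k : nat -> Z) (alpha : nat -> R) : R :=
  match t with
  | O => 0
  | S t' => lincomb t' k alpha + IZR (k t') * alpha t'
  end.

(* beta (mod 1) belongs to <alpha_1..alpha_t>_M *)
Definition in_span (M : nat) (t : nat) (alpha : nat -> R) (beta : R) : Prop :=
  exists k : nat -> Z,
    (forall i : nat, (i < t)%nat -> (Z.abs (k i) <= Z.of_nat M)%Z) /\
    exists z : Z, beta = lincomb t k alpha + IZR z.

(* A subset of T is represented by a 1-periodic subset of R (its preimage). *)
Definition periodic (V : R -> Prop) : Prop := forall x : R, V x <-> V (x + 1).

(* Open in T = preimage open in R (quotient topology). *)
Definition openR (V : R -> Prop) : Prop :=
  forall x : R, V x -> exists d : R, 0 < d /\ forall y : R, Rabs (y - x) < d -> V y.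

(* Main.v *)
Require Import Defs.
From Stdlib Require Import Reals ZArith.
From Stdlib Require Import Lra Lia List Classical ClassicalEpsilon.
Import ListNotations.
Open Scope R_scope.


Lemma frac_shift x z : frac_part (x + IZR z) = frac_part x.
Proof.
  destruct (Int_part_frac_part_spec (x + IZR z) (Int_part x + z) (frac_part x)) as [_ H].
  - pose proof (base_fp x). lra.
  - rewrite plus_IZR. pose proof (Rplus_Int_part_frac_part x). lra.
  - now rewrite H.
Qed.

Lemma dnint_shift x z : dnint (x + IZR z) = dnint x.
Proof. unfold dnint. now rewrite frac_shift. Qed.

Lemma dnint_le x z : dnint x <= Rabs (x - IZR z).
Proof.
  unfold dnint. pose proof (base_fp x) as Hf. pose proof (Rplus_Int_part_frac_part x) as Hx.
  set (f := frac_part x) in *. set (I := Int_part x) in *.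
  destruct (Z_le_gt_dec z I) as [H|H].
  - apply IZR_le in H. rewrite Rabs_right by lra.
    apply Rle_trans with f; [apply Rmin_l|lra].
  - assert (IZR I <= IZR z - 1) by (rewrite <- minus_IZR; apply IZR_le; lia).
    rewrite Rabs_left by lra.
    apply Rle_trans with (1 - f); [apply Rmin_r|lra].
Qed.

Lemma dnint_attain x : exists z, dnint x = Rabs (x - IZR z).
Proof.
  unfold dnint. pose proof (base_fp x) as Hf. pose proof (Rplus_Int_part_frac_part x) as Hx.
  unfold Rmin. destruct (Rle_dec _ _).
  - exists (Int_part x). rewrite Rabs_right; lra.
  - exists (Int_part x + 1)%Z. rewrite plus_IZR. rewrite Rabs_left; lra.
Qed.

Lemma dnint_bounds x : 0 <= dnint x <= 1/2.
Proof.
  unfold dnint. pose proof (base_fp x). unfold Rmin. destruct (Rle_dec _ _); lra.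
Qed.

Lemma dnint_lip x y : dnint x <= Rabs (x - y) + dnint y.
Proof.
  destruct (dnint_attain y) as [z Hz]. rewrite Hz.
  eapply Rle_trans. apply (dnint_le x z).
  replace (x - IZR z) with ((x - y) + (y - IZR z)) by ring. apply Rabs_triang.
Qed.

Lemma cos_Z y z : cos (y + IZR z * (2 * PI)) = cos y.
Proof.
  destruct (Z_le_gt_dec 0 z) as [H|H].
  - rewrite <- (Z2Nat.id z H). rewrite <- INR_IZR_INZ.
    replace (INR (Z.to_nat z) * (2*PI)) with (2 * INR (Z.to_nat z) * PI) by ring.
    apply cos_period.
  - set (n := Z.to_nat (- z)).
    assert (IZR z = - INR n) as E.
    { unfold n. rewrite INR_IZR_INZ, Z2Nat.id by lia. rewrite opp_IZR. ring. }
    rewrite E.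
    rewrite <- (cos_period (y + - INR n * (2*PI)) n). f_equal. ring.
Qed.

Lemma cos_dnint x : cos (2 * PI * x) = cos (2 * PI * dnint x).
Proof.
  pose proof (Rplus_Int_part_frac_part x) as Hx.
  assert (cos (2*PI*x) = cos (2*PI*frac_part x)) as E.
  { rewrite Hx at 1. rewrite <- (cos_Z (2*PI*frac_part x) (Int_part x)). f_equal. ring. }
  rewrite E. unfold dnint, Rmin. destruct (Rle_dec _ _). reflexivity.
  rewrite <- cos_neg. rewrite <- (cos_Z (- (2*PI*frac_part x)) 1). f_equal. ring.
Qed.

Fixpoint rsum (f : nat -> R) (N : nat) : R :=
  match N with O => 0 | S N' => rsum f N' + f N end.

Lemma rsum_plus f g N : rsum (fun n => f n + g n) N = rsum f N + rsum g N.
Proof. induction N; simpl; lra. Qed.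

Lemma rsum_scal c f N : rsum (fun n => c * f n) N = c * rsum f N.
Proof. induction N; simpl; [ring|rewrite IHN; ring]. Qed.

Lemma rsum_ext f g N : (forall n, (1 <= n <= N)%nat -> f n = g n) -> rsum f N = rsum g N.
Proof. induction N; simpl; intros H; auto. rewrite IHN, H; [reflexivity|lia|intros; apply H; lia]. Qed.

Lemma rsum_le f g N : (forall n, (1 <= n <= N)%nat -> f n <= g n) -> rsum f N <= rsum g N.
Proof. induction N; simpl; intros H. lra. apply Rplus_le_compat. apply IHN; intros; apply H; lia. apply H; lia. Qed.

Lemma rsum_const c N : rsum (fun _ => c) N = INR N * c.
Proof. induction N; simpl rsum. simpl; ring. rewrite IHN, S_INR. ring. Qed.

Lemma tele x N : 2 * sin (PI * x) * rsum (fun n => cos (2 * PI * INR n * x)) N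
  = sin ((2 * INR N + 1) * PI * x) - sin (PI * x).
Proof.
  induction N.
  - simpl rsum. simpl INR. replace ((2*0+1)*PI*x) with (PI*x) by ring. ring.
  - cbn [rsum]. rewrite Rmult_plus_distr_l, IHN, S_INR.
    replace ((2 * (INR N + 1) + 1) * PI * x) with (2*PI*(INR N+1)*x + PI*x) by ring.
    replace ((2 * INR N + 1) * PI * x) with (2*PI*(INR N+1)*x - PI*x) by ring.
    rewrite sin_plus, sin_minus. ring.
Qed.

Definition notint (x : R) := ~ exists z : Z, x = IZR z.

Lemma sin_nz x : notint x -> sin (PI * x) <> 0.
Proof.
  intros H E. apply sin_eq_0_0 in E. destruct E as [k Hk]. apply H. exists k.
  pose proof PI_RGT_0. apply Rmult_eq_reg_r with PI; lra.
Qed.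

Lemma cos_sum_bound x N : notint x ->
  Rabs (rsum (fun n => cos (2 * PI * INR n * x)) N) <= 1 / Rabs (sin (PI * x)).
Proof.
  intros H. pose proof (sin_nz x H) as Hs.
  assert (0 < Rabs (sin (PI*x))) by (apply Rabs_pos_lt; auto).
  pose proof (tele x N) as T.
  set (S := rsum _ N) in *.
  assert (Rabs (2 * sin (PI*x) * S) <= 2) as B.
  { rewrite T.
    pose proof (SIN_bound ((2 * INR N + 1) * PI * x)). pose proof (SIN_bound (PI*x)).
    unfold Rabs; repeat destruct Rcase_abs; lra. }
  rewrite !Rabs_mult in B. rewrite (Rabs_right 2) in B by lra.
  apply Rmult_le_reg_l with (Rabs (sin (PI*x))); auto.
  field_simplify; lra.
Qed.

Definition kadd (k1 k2 : nat -> Z) : nat -> Z := fun i => (k1 i + k2 i)%Z.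
Definition ksub (k1 k2 : nat -> Z) : nat -> Z := fun i => (k1 i - k2 i)%Z.
Definition kopp (k : nat -> Z) : nat -> Z := fun i => (- k i)%Z.
Definition k0 : nat -> Z := fun _ => 0%Z.
Definition ek (m : nat) : nat -> Z := fun i => if Nat.eqb i m then 1%Z else 0%Z.

Lemma lc_add t k1 k2 a : lincomb t (kadd k1 k2) a = lincomb t k1 a + lincomb t k2 a.
Proof. induction t; simpl; [ring|]. rewrite IHt. unfold kadd. rewrite plus_IZR. ring. Qed.
Lemma lc_sub t k1 k2 a : lincomb t (ksub k1 k2) a = lincomb t k1 a - lincomb t k2 a.
Proof. induction t; simpl; [ring|]. rewrite IHt. unfold ksub. rewrite minus_IZR. ring. Qed.
Lemma lc_opp t k a : lincomb t (kopp k) a = - lincomb t k a.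
Proof. induction t; simpl; [ring|]. rewrite IHt. unfold kopp. rewrite opp_IZR. ring. Qed.
Lemma lc_0 t a : lincomb t k0 a = 0.
Proof. induction t; simpl; [ring|]. rewrite IHt. unfold k0. simpl. ring. Qed.
Lemma lc_e t m a : (m < t)%nat -> lincomb t (ek m) a = a m.
Proof.
  induction t; intros H; [lia|]. simpl. unfold ek at 2.
  destruct (Nat.eq_dec m t) as [->|Hn].
  - rewrite Nat.eqb_refl.
    assert (lincomb t (ek t) a = 0) as ->.
    { clear. assert (forall s, (s <= t)%nat -> lincomb s (ek t) a = 0) as G.
      { induction s; intros; simpl; [ring|]. rewrite IHs by lia. unfold ek.
        replace (Nat.eqb s t) with false by (symmetry; apply Nat.eqb_neq; lia). simpl. ring. }
      apply G; lia. }
    simpl; ring.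
  - replace (Nat.eqb t m) with false by (symmetry; apply Nat.eqb_neq; lia).
    rewrite IHt by lia. simpl; ring.
Qed.

Definition tval t a (ck : R * (nat -> Z)) (n : nat) : R :=
  fst ck * cos (2 * PI * INR n * lincomb t (snd ck) a).

Fixpoint ev t a (L : list (R * (nat -> Z))) n : R :=
  match L with nil => 0 | ck :: r => tval t a ck n + ev t a r n end.

Fixpoint mul1 (ck : R * (nat -> Z)) (L : list (R * (nat -> Z))) :=
  match L with
  | nil => nil
  | ck2 :: r => (fst ck * fst ck2 / 2, kadd (snd ck) (snd ck2))
                :: (fst ck * fst ck2 / 2, ksub (snd ck) (snd ck2)) :: mul1 ck r
  end.

Fixpoint mul (L1 L2 : list (R * (nat -> Z))) :=
  match L1 with nil => nil | ck :: r => mul1 ck L2 ++ mul r L2 end.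

Fixpoint pw (L : list (R * (nat -> Z))) (p : nat) :=
  match p with O => [(1, k0)] | S p => mul L (pw L p) end.

Lemma ev_app t a L1 L2 n : ev t a (L1 ++ L2) n = ev t a L1 n + ev t a L2 n.
Proof. induction L1; simpl; [ring|rewrite IHL1; ring]. Qed.

Lemma ev_mul1 t a ck L n : ev t a (mul1 ck L) n = tval t a ck n * ev t a L n.
Proof.
  induction L as [|ck2 r IH]; simpl; [ring|]. rewrite IH. unfold tval; simpl.
  rewrite lc_add, lc_sub.
  set (A := 2 * PI * INR n * lincomb t (snd ck) a).
  set (B := 2 * PI * INR n * lincomb t (snd ck2) a).
  replace (2 * PI * INR n * (lincomb t (snd ck) a + lincomb t (snd ck2) a)) with (A + B) by (unfold A, B; ring).
  replace (2 * PI * INR n * (lincomb t (snd ck) a - lincomb t (snd ck2) a)) with (A - B) by (unfold A, B; ring).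
  rewrite cos_plus, cos_minus. field.
Qed.

Lemma ev_mul t a L1 L2 n : ev t a (mul L1 L2) n = ev t a L1 n * ev t a L2 n.
Proof. induction L1; simpl; [ring|]. rewrite ev_app, ev_mul1, IHL1. ring. Qed.

Lemma ev_pw t a L p n : ev t a (pw L p) n = (ev t a L n) ^ p.
Proof.
  induction p; simpl.
  - unfold tval; simpl. rewrite lc_0, Rmult_0_r, cos_0. ring.
  - rewrite ev_mul, IHp. ring.
Qed.

Fixpoint baseL (m : nat) : list (R * (nat -> Z)) :=
  match m with O => [(1, k0)] | S m => (1, k0) :: (1, ek m) :: baseL m end.

Fixpoint ws (m : nat) (a : nat -> R) (n : nat) : R :=
  match m with O => 1 | S m => ws m a n + (1 + cos (2 * PI * (INR n * a m))) end.

Lemma ev_base t a n : forall m, (m <= t)%nat -> ev t a (baseL m) n = ws m a n.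
Proof.
  induction m; intros H; simpl; unfold tval; simpl.
  - rewrite lc_0, Rmult_0_r, cos_0. ring.
  - rewrite IHm by lia. rewrite lc_0, Rmult_0_r, cos_0, lc_e by lia.
    rewrite Rmult_assoc. ring.
Qed.

Lemma kbound t (k : nat -> Z) : exists D : nat, forall i, (i < t)%nat -> (Z.abs (k i) <= Z.of_nat D)%Z.
Proof.
  induction t. exists 0%nat; intros; lia.
  destruct IHt as [D HD]. exists (Nat.max D (Z.to_nat (Z.abs (k t)))).
  intros i Hi. destruct (Nat.eq_dec i t) as [->|Hn].
  - rewrite Nat2Z.inj_max, Z2Nat.id by lia. lia.
  - specialize (HD i ltac:(lia)). rewrite Nat2Z.inj_max. lia.
Qed.

Lemma lbound t (L : list (R * (nat -> Z))) : exists D : nat,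
  forall ck, In ck L -> forall i, (i < t)%nat -> (Z.abs (snd ck i) <= Z.of_nat D)%Z.
Proof.
  induction L as [|ck r IH]. exists 0%nat; intros ck [].
  destruct IH as [D HD]. destruct (kbound t (snd ck)) as [D' HD'].
  exists (Nat.max D D'). intros ck' [<-|Hin] i Hi.
  - specialize (HD' i Hi). rewrite Nat2Z.inj_max. lia.
  - specialize (HD ck' Hin i Hi). rewrite Nat2Z.inj_max. lia.
Qed.

Lemma upper t a L beta :
  (forall ck, In ck L -> notint (beta + lincomb t (snd ck) a) /\ notint (beta - lincomb t (snd ck) a)) ->
  exists K, forall N, Rabs (rsum (fun n => ev t a L n * cos (2*PI*INR n*beta)) N) <= K.
Proof.
  induction L as [|ck r IH]; intros H.
  - exists 0. intros N. simpl ev. rewrite (rsum_ext _ (fun _ => 0 * 0)).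
    rewrite rsum_scal, Rmult_0_l, Rabs_R0. lra. intros; ring.
  - destruct IH as [K HK]. { intros ck' Hin. apply H. right; auto. }
    destruct (H ck (or_introl eq_refl)) as [H1 H2].
    set (th := lincomb t (snd ck) a) in *.
    exists (Rabs (fst ck) / 2 * (1 / Rabs (sin (PI * (beta + th))) + 1 / Rabs (sin (PI * (beta - th)))) + K).
    intros N. simpl ev.
    rewrite (rsum_ext _ (fun n => fst ck / 2 * (cos (2*PI*INR n*(beta+th)) + cos (2*PI*INR n*(beta-th)))
                                  + ev t a r n * cos (2*PI*INR n*beta))).
    2:{ intros n _. unfold tval. fold th.
        replace (2*PI*INR n*(beta+th)) with (2*PI*INR n*beta + 2*PI*INR n*th) by ring.
        replace (2*PI*INR n*(beta-th)) with (2*PI*INR n*beta - 2*PI*INR n*th) by ring.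
        rewrite cos_plus, cos_minus. field. }
    rewrite rsum_plus, rsum_scal, rsum_plus.
    eapply Rle_trans. apply Rabs_triang. apply Rplus_le_compat; [|apply HK].
    rewrite Rabs_mult. unfold Rdiv at 1. rewrite Rabs_mult, (Rabs_right (Rinv 2)) by lra.
    replace (Rabs (fst ck) * /2) with (Rabs (fst ck) / 2) by (unfold Rdiv; ring).
    apply Rmult_le_compat_l. apply Rmult_le_pos; [apply Rabs_pos|lra].
    eapply Rle_trans. apply Rabs_triang.
    apply Rplus_le_compat; apply cos_sum_bound; auto.
Qed.

Fixpoint cnt (b : nat -> bool) (N : nat) : nat :=
  match N with O => O | S N' => (cnt b N' + (if b N then 1 else 0))%nat end.

Lemma rsum_cnt (b : nat -> bool) N : rsum (fun n => if b n then 1 else 0) N = INR (cnt b N).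
Proof.
  induction N; simpl rsum. reflexivity. cbn [cnt]. rewrite plus_INR, IHN. destruct (b (S N)); simpl; ring.
Qed.

Fixpoint sumc (Q : nat) (f : nat -> nat) : nat :=
  match Q with O => O | S Q' => (sumc Q' f + f Q')%nat end.

Lemma sumc_ind x Q : sumc Q (fun c => if Nat.eqb x c then 1%nat else 0%nat) = if Nat.ltb x Q then 1%nat else 0%nat.
Proof.
  induction Q; simpl. destruct x; reflexivity.
  rewrite IHQ. destruct (Nat.ltb_spec x Q), (Nat.eqb_spec x Q), (Nat.ltb_spec x (S Q)); lia.
Qed.

Lemma sumc_plus Q f g : sumc Q (fun c => f c + g c)%nat = (sumc Q f + sumc Q g)%nat.
Proof. induction Q; simpl; lia. Qed.

Lemma sumc_ext Q f g : (forall c, (c < Q)%nat -> f c = g c) -> sumc Q f = sumc Q g.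
Proof. induction Q; simpl; intros H; auto. rewrite IHQ, H; auto. Qed.

Lemma sumc_le Q f m : (forall c, (c < Q)%nat -> (f c <= m)%nat) -> (sumc Q f <= Q * m)%nat.
Proof. induction Q; simpl; intros H; auto. specialize (IHQ ltac:(intros; apply H; lia)). specialize (H Q ltac:(lia)). lia. Qed.

Lemma sumc_scal Q k f : sumc Q (fun c => k * f c)%nat = (k * sumc Q f)%nat.
Proof. induction Q; simpl; lia. Qed.

Lemma sumc_cnt (code : nat -> nat) Q : (forall n, (code n < Q)%nat) ->
  forall N, sumc Q (fun c => cnt (fun n => Nat.eqb (code n) c) N) = N.
Proof.
  intros Hc. induction N.
  - simpl. clear Hc. induction Q; simpl; [reflexivity|rewrite IHQ; reflexivity].
  - cbn [cnt]. rewrite sumc_plus, IHN, sumc_ind.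
    specialize (Hc (S N)). destruct (Nat.ltb_spec (code (S N)) Q); lia.
Qed.

Lemma pigeon_class (code : nat -> nat) Q : (1 <= Q)%nat -> (forall n, (code n < Q)%nat) ->
  forall N, exists c, (c < Q)%nat /\ (N <= Q * cnt (fun n => Nat.eqb (code n) c) N)%nat.
Proof.
  intros HQ Hc N. destruct N as [|N']. exists 0%nat; lia.
  apply NNPP. intros Hno.
  assert (forall c, (c < Q)%nat -> (Q * cnt (fun n => Nat.eqb (code n) c) (S N') <= N')%nat) as Hb.
  { intros c Hcq. destruct (Nat.le_gt_cases (Q * cnt (fun n => Nat.eqb (code n) c) (S N')) N') as [h|h]; auto.
    exfalso; apply Hno; exists c; split; auto; lia. }
  pose proof (sumc_le Q _ N' Hb) as Hs. rewrite sumc_scal, sumc_cnt in Hs by auto. nia.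
Qed.

Lemma first_el (f : nat -> bool) N : cnt f N = 0%nat \/
  exists n0, (1 <= n0 <= N)%nat /\ f n0 = true /\ cnt f (n0 - 1) = 0%nat.
Proof.
  induction N. left; reflexivity.
  destruct IHN as [H|[n0 [H1 [H2 H3]]]].
  - destruct (f (S N)) eqn:E.
    + right. exists (S N). split; [lia|]. split; auto. replace (S N - 1)%nat with N by lia; auto.
    + left. cbn [cnt]. rewrite E, H. reflexivity.
  - right. exists n0. split; [lia|auto].
Qed.

Lemma cnt_shift (f : nat -> bool) n0 d : cnt f (n0 + d) = (cnt f n0 + cnt (fun m => f (n0 + m)%nat) d)%nat.
Proof. induction d. rewrite Nat.add_0_r; cbn [cnt]. symmetry; apply Nat.add_0_r. rewrite Nat.add_succ_r. cbn [cnt]. rewrite IHd. rewrite <- Nat.add_succ_r. lia. Qed.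

Lemma cnt_mono (f g : nat -> bool) d : (forall m, (1 <= m <= d)%nat -> f m = true -> g m = true) ->
  (cnt f d <= cnt g d)%nat.
Proof.
  induction d; intros H; simpl. lia.
  specialize (IHd ltac:(intros; apply H; auto; lia)).
  destruct (f (S d)) eqn:E. rewrite (H (S d)); auto; lia. destruct (g (S d)); lia.
Qed.

Lemma cnt_monoN (g : nat -> bool) d N : (d <= N)%nat -> (cnt g d <= cnt g N)%nat.
Proof. induction 1. lia. simpl. lia. Qed.

Lemma class_le (f g : nat -> bool) :
  (forall n m, (1 <= n < m)%nat -> f n = true -> f m = true -> g (m - n)%nat = true) ->
  forall N, (cnt f N <= cnt g N + 1)%nat.
Proof.
  intros H N. destruct (first_el f N) as [E|[n0 [H1 [H2 H3]]]]. lia.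
  replace N with (n0 + (N - n0))%nat by lia. rewrite cnt_shift.
  assert (cnt f n0 = 1%nat) as ->.
  { replace n0 with (S (n0 - 1)) at 1 by lia. cbn [cnt]. rewrite H3.
    replace (S (n0 - 1)) with n0 by lia. rewrite H2. reflexivity. }
  assert (cnt (fun m => f (n0 + m)%nat) (N - n0) <= cnt g (N - n0))%nat.
  { apply cnt_mono. intros m Hm Hf. replace m with ((n0 + m) - n0)%nat by lia. apply H; auto; lia. }
  pose proof (cnt_monoN g (N - n0) (n0 + (N - n0)) ltac:(lia)). lia.
Qed.

Lemma density (code : nat -> nat) Q (g : nat -> bool) : (1 <= Q)%nat -> (forall n, (code n < Q)%nat) ->
  (forall n m, (1 <= n < m)%nat -> code n = code m -> g (m - n)%nat = true) ->
  forall N, (N <= Q * cnt g N + Q)%nat.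
Proof.
  intros HQ Hc Hg N. destruct (pigeon_class code Q HQ Hc N) as [c [Hcq HN]].
  pose proof (class_le (fun n => Nat.eqb (code n) c) g) as Hcl.
  assert (cnt (fun n => Nat.eqb (code n) c) N <= cnt g N + 1)%nat.
  { apply Hcl. intros n m Hnm E1 E2. apply Nat.eqb_eq in E1, E2. apply Hg; auto; lia. }
  nia.
Qed.

Definition digit (L : nat) (a : nat -> R) (n i : nat) : nat :=
  Z.to_nat (Int_part (INR L * frac_part (INR n * a i))).

Fixpoint codef (L : nat) (a : nat -> R) (m n : nat) : nat :=
  match m with O => O | S m => (codef L a m n * L + digit L a n m)%nat end.

Lemma Int_range y (L : nat) : 0 <= y < INR L -> (0 <= Int_part y)%Z /\ (Int_part y < Z.of_nat L)%Z.
Proof.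
  intros H. pose proof (base_Int_part y) as [H1 H2]. split.
  - apply le_IZR. assert (-1 < IZR (Int_part y)) by lra.
    apply lt_IZR in H0. apply IZR_le. lia.
  - apply lt_IZR. rewrite <- INR_IZR_INZ. lra.
Qed.

Lemma digit_lt L a n i : (1 <= L)%nat -> (digit L a n i < L)%nat.
Proof.
  intros HL. unfold digit. pose proof (base_fp (INR n * a i)) as Hf.
  assert (1 <= INR L) by (apply (le_INR 1); auto).
  destruct (Int_range (INR L * frac_part (INR n * a i)) L) as [h1 h2]. nra. lia.
Qed.

Lemma codef_lt L a m n : (1 <= L)%nat -> (codef L a m n < L ^ m)%nat.
Proof.
  intros HL. induction m; simpl. lia. pose proof (digit_lt L a n m HL). nia.
Qed.

Lemma divmod_uniq a b x y L : (a * L + x = b * L + y)%nat -> (x < L)%nat -> (y < L)%nat -> a = b /\ x = y.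
Proof.
  intros E Hx Hy. destruct (Nat.lt_trichotomy a b) as [h|[h|h]].
  - assert (a * L + L <= b * L)%nat by (replace (a * L + L)%nat with ((a+1)*L)%nat by lia; apply Nat.mul_le_mono_r; lia). lia.
  - subst. lia.
  - assert (b * L + L <= a * L)%nat by (replace (b * L + L)%nat with ((b+1)*L)%nat by lia; apply Nat.mul_le_mono_r; lia). lia.
Qed.

Lemma codef_eq L a m n n' : (1 <= L)%nat -> codef L a m n = codef L a m n' ->
  forall i, (i < m)%nat -> digit L a n i = digit L a n' i.
Proof.
  intros HL. induction m; intros E i Hi. lia. simpl in E.
  pose proof (digit_lt L a n m HL). pose proof (digit_lt L a n' m HL).
  destruct (divmod_uniq _ _ _ _ _ E) as [E1 E2]; auto.
  destruct (Nat.eq_dec i m) as [->|]; auto. apply IHm; auto; lia.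
Qed.

Lemma digit_close L a n m i : (1 <= L)%nat -> digit L a n i = digit L a m i ->
  Rabs (frac_part (INR m * a i) - frac_part (INR n * a i)) < 1 / INR L.
Proof.
  intros HL E. unfold digit in E.
  assert (1 <= INR L) by (apply (le_INR 1); auto).
  pose proof (base_fp (INR n * a i)). pose proof (base_fp (INR m * a i)).
  set (y1 := INR L * frac_part (INR n * a i)). set (y2 := INR L * frac_part (INR m * a i)).
  destruct (Int_range y1 L) as [h1 h2]. unfold y1; nra.
  destruct (Int_range y2 L) as [h3 h4]. unfold y2; nra.
  assert (Int_part y1 = Int_part y2) as EI.
  { apply (f_equal Z.of_nat) in E. rewrite !Z2Nat.id in E; auto. }
  pose proof (base_Int_part y1). pose proof (base_Int_part y2). rewrite EI in *.
  assert (Rabs (y2 - y1) < 1) by (unfold Rabs; destruct Rcase_abs; lra).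
  unfold y1, y2 in *. rewrite <- Rmult_minus_distr_l, Rabs_mult, Rabs_right in H4 by lra.
  apply Rmult_lt_reg_l with (INR L). lra. field_simplify; lra.
Qed.

Lemma code_bohr L a t dl n m : (1 <= L)%nat -> 1 / INR L <= dl -> (1 <= n < m)%nat ->
  codef L a t n = codef L a t m -> Bohr t a dl (m - n).
Proof.
  intros HL Hd Hnm E. split. lia. intros i Hi.
  pose proof (codef_eq L a t n m HL E i Hi) as Ed.
  pose proof (digit_close L a n m i HL Ed) as Hc.
  eapply Rle_trans. apply (dnint_le _ (Int_part (INR m * a i) - Int_part (INR n * a i))).
  rewrite minus_INR by lia. rewrite minus_IZR.
  pose proof (Rplus_Int_part_frac_part (INR m * a i)). pose proof (Rplus_Int_part_frac_part (INR n * a i)).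
  replace ((INR m - INR n) * a i - (IZR (Int_part (INR m * a i)) - IZR (Int_part (INR n * a i))))
    with (frac_part (INR m * a i) - frac_part (INR n * a i)) by lra. lra.
Qed.

Lemma cos_mono d e : 0 <= d -> d <= e -> e <= 1/2 -> cos (2*PI*e) <= cos (2*PI*d).
Proof. intros. pose proof PI_RGT_0. apply cos_decr_1; nra. Qed.

Lemma cos_strict d e : 0 <= d -> d < e -> e <= 1/2 -> cos (2*PI*e) < cos (2*PI*d).
Proof. intros. pose proof PI_RGT_0. apply cos_decreasing_1; nra. Qed.

Lemma cos_half d : 0 <= d <= 1/6 -> 1/2 <= cos (2*PI*d).
Proof.
  intros H. rewrite <- cos_PI3. pose proof PI_RGT_0.
  replace (PI/3) with (2*PI*(1/6)) by field. apply cos_mono; lra.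
Qed.

Lemma ws_ge1 m a n : 1 <= ws m a n.
Proof. induction m; simpl. lra. pose proof (COS_bound (2 * PI * (INR n * a m))). lra. Qed.

Lemma ws_le m a n : ws m a n <= 1 + 2 * INR m.
Proof. induction m; simpl ws. simpl; lra. rewrite S_INR. pose proof (COS_bound (2 * PI * (INR n * a m))). lra. Qed.

Lemma ws_in m a n c : (forall i, (i < m)%nat -> c <= cos (2*PI*(INR n * a i))) -> 1 + INR m * (1 + c) <= ws m a n.
Proof.
  induction m; intros H; simpl ws. simpl; lra. rewrite S_INR.
  specialize (IHm ltac:(intros; apply H; lia)). specialize (H m ltac:(lia)). lra.
Qed.

Lemma ws_out m a n b : (exists i, (i < m)%nat /\ cos (2*PI*(INR n * a i)) <= b) -> ws m a n <= 2 * INR m + b.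
Proof.
  induction m; intros [i [Hi Hc]]. lia. simpl ws. rewrite S_INR.
  pose proof (COS_bound (2 * PI * (INR n * a m))).
  destruct (Nat.eq_dec i m) as [->|].
  - pose proof (ws_le m a n). lra.
  - assert (ws m a n <= 2 * INR m + b) by (apply IHm; exists i; split; auto; lia). lra.
Qed.

Definition dec (P : nat -> Prop) : nat -> bool :=
  fun n => if excluded_middle_informative (P n) then true else false.

Lemma INR_big (X : R) : exists N : nat, X < INR N.
Proof.
  destruct (archimed (Rabs X)) as [H _]. exists (Z.to_nat (up (Rabs X))).
  rewrite INR_IZR_INZ, Z2Nat.id. unfold Rabs in *; destruct Rcase_abs; lra.
  apply le_IZR. pose proof (Rabs_pos X). lra.
Qed.

Lemma delta_choice (t : nat) (b0 : R) : 0 <= b0 < 1 -> forall e', 0 < e' <= 1/4 ->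
  exists dl, 0 < dl <= e' /\ INR t * (1 - cos (2*PI*dl)) < 1 - b0.
Proof.
  intros Hb e' He.
  pose proof (pos_INR t) as Ht.
  set (dl := Rmin e' ((1 - b0) / (8 * (INR t + 1)))).
  assert (0 < (1 - b0) / (8 * (INR t + 1))) by (apply Rdiv_lt_0_compat; lra).
  assert (0 < dl) by (unfold dl, Rmin; destruct Rle_dec; lra).
  assert (dl <= e') by apply Rmin_l.
  assert (dl <= (1 - b0) / (8 * (INR t + 1))) by apply Rmin_r.
  exists dl. split. lra.
  pose proof PI_RGT_0. pose proof PI_4.
  replace (2*PI*dl) with (2*(PI*dl)) by ring. rewrite cos_2a_sin.
  assert (0 <= sin (PI*dl)) by (apply sin_ge_0; nra).
  assert (sin (PI*dl) < PI*dl) by (apply sin_lt_x; nra).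
  assert (dl * (8 * (INR t + 1)) <= 1 - b0).
  { apply Rmult_le_reg_r with (/ (8 * (INR t + 1))). apply Rinv_0_lt_compat; lra.
    rewrite Rmult_assoc, Rinv_r, Rmult_1_r by lra. exact H2. }
  assert (INR t * (2 * (PI*dl)^2) <= INR t * (2 * 16 * dl^2)) by (apply Rmult_le_compat_l; [lra|]; assert (PI*PI <= 16) by nra; assert (0 <= dl*dl) by nra; nra).
  assert (INR t * (2*16*dl^2) < 1 - b0) by nra.
  assert (1 - (1 - 2 * sin (PI * dl) * sin (PI * dl)) <= 2 * (PI*dl)^2) by nra.
  nra.
Qed.

Lemma div_nonneg x y : 0 <= x -> 0 < y -> 0 <= x / y.
Proof. intros. unfold Rdiv. apply Rmult_le_pos; [lra|left; apply Rinv_0_lt_compat; lra]. Qed.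

Lemma part1 (t : nat) (alpha : nat -> R) (eps : R) (heps : 0 < eps) :
  exists M : nat, (1 <= M)%nat /\
     forall beta : R, normS_le beta (Bohr t alpha eps) (1/6) -> in_span M t alpha beta.
Proof.
  pose proof PI_RGT_0 as HPI.
  set (e' := Rmin eps (1/4)).
  assert (He' : 0 < e' <= 1/4 /\ e' <= eps).
  { unfold e', Rmin; destruct Rle_dec; lra. }
  set (b0 := cos (2*PI*e')).
  assert (Hb0 : 0 <= b0 < 1).
  { unfold b0. split. apply cos_ge_0; nra.
    rewrite <- cos_0. apply cos_decreasing_1; nra. }
  destruct (delta_choice t b0 Hb0 e' ltac:(lra)) as [dl [Hdl Hdla]].
  set (a0 := cos (2*PI*dl)) in *.
  pose proof (pos_INR t) as Ht.
  set (A := 1 + INR t * (1 + a0)).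
  set (Bq := 2 * INR t + b0).
  assert (HAB : Bq < A) by (unfold A, Bq; lra).
  assert (HBq : 0 <= Bq) by (unfold Bq; lra).
  set (L := Z.to_nat (up (1/dl))).
  assert (HLd : 1 / INR L <= dl /\ (1 <= L)%nat).
  { destruct (archimed (1/dl)) as [h1 _].
    assert (0 < 1/dl) by (apply Rdiv_lt_0_compat; lra).
    assert (IZR (up (1/dl)) = INR L) as EL.
    { unfold L. rewrite INR_IZR_INZ, Z2Nat.id; auto. apply le_IZR; lra. }
    assert (1 <= L)%nat.
    { apply INR_le. simpl. rewrite <- EL. assert (0 < IZR (up (1/dl))) by lra.
      apply lt_IZR in H0. apply IZR_le. lia. }
    split; auto. rewrite <- EL.
    apply Rmult_le_reg_r with (IZR (up (1/dl)) / dl). apply Rdiv_lt_0_compat; lra.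
    field_simplify; try lra. }
  destruct HLd as [HLd HL1].
  set (Q := (L ^ t)%nat).
  assert (HQ : (1 <= Q)%nat) by (unfold Q; pose proof (Nat.pow_le_mono_l 1 L t HL1); rewrite Nat.pow_1_l in H; lia).
  assert (HQR : 1 <= INR Q) by (apply (le_INR 1); auto).
  destruct (pow_lt_1_zero (Bq / A) ltac:(rewrite Rabs_right; [apply Rmult_lt_reg_r with A; [lra|]; field_simplify; lra | apply Rle_ge, div_nonneg; lra])
              (1 / (2 * INR Q)) ltac:(apply Rdiv_lt_0_compat; lra)) as [p Hp].
  specialize (Hp p (le_n p)).
  assert (Hpq : 2 * INR Q * Bq ^ p < A ^ p).
  { rewrite Rabs_right in Hp by (apply Rle_ge, pow_le, div_nonneg; lra).
    unfold Rdiv in Hp. rewrite Rpow_mult_distr, pow_inv in Hp.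
    assert (0 < A ^ p) by (apply pow_lt; lra).
    apply Rmult_lt_compat_r with (r := 2 * INR Q * A ^ p) in Hp; [|nra].
    field_simplify in Hp; lra. }
  set (L0 := pw (baseL t) p).
  destruct (lbound t L0) as [D HD].
  exists (Nat.max D 1). split. lia.
  intros beta Hbeta. apply NNPP. intros Hns.
  assert (Hni : forall ck, In ck L0 -> notint (beta + lincomb t (snd ck) alpha) /\ notint (beta - lincomb t (snd ck) alpha)).
  { intros ck Hin. split; intros [z Hz]; apply Hns.
    - exists (kopp (snd ck)). split.
      + intros i Hi. unfold kopp. rewrite Z.abs_opp. specialize (HD ck Hin i Hi). rewrite Nat2Z.inj_max. lia.
      + exists z. rewrite lc_opp. lra.
    - exists (snd ck). split.
      + intros i Hi. specialize (HD ck Hin i Hi). rewrite Nat2Z.inj_max. lia.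
      + exists z. lra. }
  destruct (upper t alpha L0 beta Hni) as [K HK].
  set (g := dec (Bohr t alpha dl)).
  assert (Hterm : forall n, (1 <= n)%nat ->
    A ^ p / 2 * (if g n then 1 else 0) + - Bq ^ p <= ev t alpha L0 n * cos (2*PI*INR n*beta)).
  { intros n Hn. unfold L0. rewrite ev_pw, ev_base by lia.
    pose proof (ws_ge1 t alpha n) as Hw1.
    assert (0 <= ws t alpha n ^ p) as Hwp by (apply pow_le; lra).
    assert (0 <= Bq ^ p) as HBp by (apply pow_le; lra).
    destruct (classic (Bohr t alpha eps n)) as [Hb|Hb].
    - pose proof (Hbeta n Hb) as Hd. pose proof (dnint_bounds (INR n * beta)).
      rewrite Rmult_assoc, cos_dnint.
      assert (1/2 <= cos (2 * PI * dnint (INR n * beta))) by (apply cos_half; lra).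
      unfold g, dec. destruct (excluded_middle_informative _) as [Hbd|Hbd].
      + assert (A <= ws t alpha n).
        { apply ws_in. intros i Hi. destruct Hbd as [_ Hbd]. specialize (Hbd i Hi).
          pose proof (dnint_bounds (INR n * alpha i)).
          rewrite cos_dnint. apply cos_mono; lra. }
        assert (A ^ p <= ws t alpha n ^ p) by (apply pow_incr; unfold A in *; lra).
        nra.
      + nra.
    - assert (exists i, (i < t)%nat /\ eps < dnint (INR n * alpha i)) as [i [Hi Hgt]].
      { apply NNPP. intros Hno. apply Hb. split; auto. intros i Hi.
        apply Rnot_lt_le. intros Hlt. apply Hno. exists i; auto. }
      assert (ws t alpha n <= Bq).
      { apply ws_out. exists i. split; auto. pose proof (dnint_bounds (INR n * alpha i)).
        rewrite cos_dnint. left. apply cos_strict; lra. }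
      assert (ws t alpha n ^ p <= Bq ^ p) by (apply pow_incr; lra).
      unfold g, dec. destruct (excluded_middle_informative _) as [Hbd|Hbd].
      + exfalso. apply Hb. destruct Hbd as [h1 h2]. split; auto. intros j Hj. specialize (h2 j Hj). lra.
      + pose proof (COS_bound (2 * PI * INR n * beta)). nra. }
  assert (Hlow : forall N, A ^ p / 2 * INR (cnt g N) - INR N * Bq ^ p
                   <= rsum (fun n => ev t alpha L0 n * cos (2*PI*INR n*beta)) N).
  { intros N. eapply Rle_trans; [|apply rsum_le; intros n Hn; apply Hterm; lia].
    rewrite rsum_plus, rsum_scal, rsum_const, rsum_cnt. lra. }
  assert (Hden : forall N, (N <= Q * cnt g N + Q)%nat).
  { apply (density (codef L alpha t) Q g HQ).
    - intros n. apply codef_lt; auto.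
    - intros n m Hnm E. unfold g, dec. destruct (excluded_middle_informative _) as [_|Hc]; auto.
      exfalso. apply Hc. exact (code_bohr L alpha t dl n m HL1 HLd Hnm E). }
  set (gam := A ^ p / (2 * INR Q) - Bq ^ p).
  assert (Hgam : 0 < gam).
  { unfold gam. apply Rmult_lt_reg_r with (2 * INR Q). lra. field_simplify; lra. }
  destruct (INR_big ((K + A ^ p / 2 + 1) / gam)) as [N HN].
  specialize (Hlow N). specialize (HK N). specialize (Hden N).
  apply le_INR in Hden. rewrite plus_INR, mult_INR in Hden.
  assert (INR N * gam > K + A ^ p / 2).
  { assert ((K + A^p/2 + 1) / gam * gam = K + A^p/2 + 1) by (field; lra). nra. }
  assert (A ^ p / 2 * INR (cnt g N) >= INR N * (A ^ p / (2 * INR Q)) - A ^ p / 2).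
  { assert (0 < A ^ p) by (apply pow_lt; lra).
    assert (INR N / INR Q <= INR (cnt g N) + 1).
    { apply Rmult_le_reg_r with (INR Q). lra. unfold Rdiv. rewrite Rmult_assoc, Rinv_l, Rmult_1_r by lra. lra. }
    replace (INR N * (A ^ p / (2 * INR Q))) with (A ^ p / 2 * (INR N / INR Q)) by (field; lra).
    nra. }
  unfold gam in *.
  pose proof (Rle_abs (rsum (fun n => ev t alpha L0 n * cos (2*PI*INR n*beta)) N)).
  nra.
Qed.

Lemma per_nat V : periodic V -> forall n x, V x <-> V (x + INR n).
Proof.
  intros HV n. induction n; intros x. simpl. rewrite Rplus_0_r. tauto.
  rewrite S_INR. rewrite (IHn x). replace (x + (INR n + 1)) with ((x + INR n) + 1) by ring. apply HV.
Qed.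

Lemma per_Z V : periodic V -> forall z x, V x <-> V (x + IZR z).
Proof.
  intros HV z x. destruct (Z_le_gt_dec 0 z) as [H|H].
  - rewrite <- (Z2Nat.id z H), <- INR_IZR_INZ. apply per_nat; auto.
  - set (n := Z.to_nat (- z)). assert (IZR z = - INR n) as E.
    { unfold n. rewrite INR_IZR_INZ, Z2Nat.id by lia. rewrite opp_IZR. ring. }
    rewrite E. rewrite (per_nat V HV n (x + - INR n)). replace (x + - INR n + INR n) with x by ring. tauto.
Qed.

Fixpoint maxl (f : R -> nat) (l : list R) : nat :=
  match l with nil => 1%nat | x :: r => Nat.max (f x) (maxl f r) end.

Lemma maxl_ge f l x : In x l -> (f x <= maxl f l)%nat.
Proof. induction l; simpl; [intros []|intros [->|H]; [lia|]]. specialize (IHl H). lia. Qed.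

Lemma maxl_1 f l : (1 <= maxl f l)%nat.
Proof. induction l; simpl; lia. Qed.

Lemma part2 (t : nat) (alpha : nat -> R) (eps : R) (M : nat) :
  (forall beta : R, normS_le beta (Bohr t alpha eps) (1/6) -> in_span M t alpha beta) ->
  forall V : R -> Prop, periodic V -> openR V ->
     (forall x : R, in_span M t alpha x -> V x) ->
     exists N : nat, (1 <= N)%nat /\
       forall beta : R, normS_le beta (BohrN N t alpha eps) (1/6) -> V beta.
Proof.
  intros HM V HV HO HS.
  assert (Hloc : forall x, exists dn : R * nat, 0 < fst dn /\
    ((forall y, Rabs (y - x) < fst dn -> V y) \/
     (Bohr t alpha eps (snd dn) /\ forall y, Rabs (y - x) < fst dn -> 1/6 < dnint (INR (snd dn) * y)))).
  { intros x. destruct (classic (V x)) as [Hv|Hv].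
    - destruct (HO x Hv) as [d [Hd Hd']]. exists (d, 1%nat). simpl. split; auto.
    - assert (~ normS_le x (Bohr t alpha eps) (1/6)) as Hn by (intros Hc; apply Hv, HS, HM, Hc).
      assert (exists n, Bohr t alpha eps n /\ 1/6 < dnint (INR n * x)) as [n [Hb Hg]].
      { apply NNPP. intros Hno. apply Hn. intros n Hb. apply Rnot_lt_le. intros Hlt. apply Hno. exists n; auto. }
      assert (1 <= INR n) by (apply (le_INR 1); destruct Hb; auto).
      exists ((dnint (INR n * x) - 1/6) / INR n, n). simpl. split.
      + apply Rdiv_lt_0_compat; lra.
      + right. split; auto. intros y Hy.
        pose proof (dnint_lip (INR n * x) (INR n * y)).
        replace (INR n * x - INR n * y) with (INR n * (x - y)) in H0 by ring.
        rewrite Rabs_mult, Rabs_right in H0 by lra.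
        rewrite <- Rabs_Ropp in Hy. replace (- (y - x)) with (x - y) in Hy by ring.
        apply Rmult_lt_compat_l with (r := INR n) in Hy; [|lra].
        replace (INR n * ((dnint (INR n * x) - 1 / 6) / INR n)) with (dnint (INR n * x) - 1/6) in Hy by (field; lra).
        lra. }
  destruct (choice _ Hloc) as [F HF].
  set (fam := fun x y => (0 <= x <= 1) /\ Rabs (y - x) < fst (F x)).
  assert (cf : forall x, (exists y, fam x y) -> (fun x => 0 <= x <= 1) x).
  { intros x [y [h _]]. exact h. }
  set (fm := Rtopology.mkfamily (fun x => 0 <= x <= 1) fam cf).
  assert (Hcov : Rtopology.covering_open_set (fun c => 0 <= c <= 1) fm).
  { split.
    - intros x Hx. exists x. simpl. unfold fam. split; auto. unfold Rminus. rewrite Rplus_opp_r, Rabs_R0.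
      apply (proj1 (HF x)).
    - intros x y [Hx Hy]. simpl in Hy.
      assert (0 < fst (F x) - Rabs (y - x)) as Hp by lra.
      exists (mkposreal _ Hp). intros z Hz. unfold Rtopology.disc in Hz. simpl in Hz.
      simpl. unfold fam. split; auto.
      replace (z - x) with ((z - y) + (y - x)) by ring.
      eapply Rle_lt_trans. apply Rabs_triang. lra. }
  destruct (Rtopology.compact_P3 0 1 fm Hcov) as [Dset [Hcov2 [l Hl]]].
  exists (maxl (fun x => snd (F x)) l). split. apply maxl_1.
  intros beta Hbeta.
  set (b' := beta + IZR (- Int_part beta)).
  assert (Hb' : 0 <= b' <= 1).
  { unfold b'. rewrite opp_IZR. pose proof (Rplus_Int_part_frac_part beta). pose proof (base_fp beta). lra. }
  destruct (Hcov2 b' Hb') as [x [[Hx1 Hx2] Hx3]]. simpl in Hx1, Hx3.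
  assert (Hin : In x l) by (apply Hl; simpl; split; auto).
  apply (per_Z V HV (- Int_part beta) beta). fold b'.
  destruct (HF x) as [Hd [Hv|[Hb Hg]]].
  - apply Hv; apply Hx2.
  - exfalso. specialize (Hg b' Hx2).
    assert (BohrN (maxl (fun x => snd (F x)) l) t alpha eps (snd (F x))) as HbN.
    { split; auto. apply (maxl_ge (fun x => snd (F x))); auto. }
    specialize (Hbeta _ HbN). unfold b' in Hg.
    rewrite Rmult_plus_distr_l in Hg.
    replace (INR (snd (F x)) * IZR (- Int_part beta)) with (IZR (Z.of_nat (snd (F x)) * - Int_part beta)) in Hg
      by (rewrite mult_IZR, <- INR_IZR_INZ; reflexivity).
    rewrite dnint_shift in Hg. lra.
Qed.

Theorem lemma4 (t : nat) (alpha : nat -> R) (eps : R) (heps : 0 < eps) :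
  (exists M : nat, (1 <= M)%nat /\
     forall beta : R, normS_le beta (Bohr t alpha eps) (1/6) -> in_span M t alpha beta)
  /\
  (forall M : nat, (1 <= M)%nat ->
     (forall beta : R, normS_le beta (Bohr t alpha eps) (1/6) -> in_span M t alpha beta) ->
     forall V : R -> Prop, periodic V -> openR V ->
       (forall x : R, in_span M t alpha x -> V x) ->
       exists N : nat, (1 <= N)%nat /\
         forall beta : R, normS_le beta (BohrN N t alpha eps) (1/6) -> V beta).
Proof.
  split.
  - apply part1; auto.
  - intros M _ HM. apply (part2 t alpha eps M HM).
Qed.
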